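(* Let $n\ge 1$ be an integer and $R=\mathbb{Z}_2\times\cdots\times\mathbb{Z}_2$ ($n$ factors). Then $\Gamma'(R)$ is perfect; equivalently, neither $\Gamma'(R)$ nor its complement $\overline{\Gamma'(R)}$ contains an induced cycle of odd length at least $5$.
   Context: All rings are commutative with identity. $W^*(R)$ denotes the set of non-zero non-unit elements of $R$. The cozero-divisor graph $\Gamma'(R)$ is the simple graph with vertex set $W^*(R)$, in which distinct $a,b$ are adjacent iff $a\notin Rb$ and $b\notin Ra$. A graph $G$ is perfect if every induced subgraph $H$ satisfies $\omega(H)=\chi(H)$ (clique number equals chromatic number). *)

(* Defs.v *)
From HB Require Import structures.
From mathcomp Require Import all_boot all_order all_algebra.
Set Implicit Arguments. Unset Strict Implicit. Unset Printing Implicit Defensive.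
Import GRing.Theory.
Local Open Scope ring_scope.

Section Graphs.
Variables (V : finType) (e : rel V).

Definition is_clique (K : {set V}) : bool :=
  [forall x in K, forall y in K, (x != y) ==> e x y].

Definition clique_num (S : {set V}) : nat :=
  \max_(K : {set V} | (K \subset S) && is_clique K) #|K|.

(* S (induced subgraph) admits a proper colouring with colours in {0,..,k-1}
   (colours are drawn from 'I_#|V|, which suffices since at most #|V| colours
   are ever needed; only the colours on S matter) *)
Definition colorable (S : {set V}) (k : nat) : bool :=
  [exists f : {ffun V -> 'I_#|V|},
     [forall x in S, (f x < k)%N] &&
     [forall x in S, forall y in S, e x y ==> (f x != f y)]].

(* chromatic number of the induced subgraph on S: the least k <= #|V| such
   that S is k-colourable (S is always #|V|-colourable, so this is the
   genuine chromatic number). *)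
Definition chrom_num (S : {set V}) : nat :=
  \big[minn/#|V|]_(k < #|V|.+1 | colorable S k) k.

Definition perfect (W : {set V}) : Prop :=
  forall S : {set V}, S \subset W -> clique_num S = chrom_num S.
End Graphs.

Section Cozero.
Variable R : finPzRingType.

Definition unitb (x : R) : bool := [exists u : R, (u * x == 1) && (x * u == 1)].

Definition Wstar : {set R} := [set x : R | (x != 0) && ~~ unitb x].

Definition in_principal (a b : R) : bool := [exists r : R, a == r * b].

Definition cozero_adj : rel R :=
  fun a b => [&& a != b, ~~ in_principal a b & ~~ in_principal b a].
End Cozero.

(* elements: functions 'I_n -> 'Z_2 with componentwise addition and multiplication *)
Definition Z2pow (n : nat) := {ffun 'I_n -> 'Z_2}.
HB.instance Definition _ n := Finite.on (Z2pow n).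
HB.instance Definition _ n := GRing.PzRing.on (Z2pow n).

(* Main.v *)
Require Import Defs.
From HB Require Import structures.
From mathcomp Require Import all_boot all_order all_algebra.
From mathcomp Require Import zify.
Set Implicit Arguments. Unset Strict Implicit. Unset Printing Implicit Defensive.

Section Dil.
Variable T : finType.
Variable le : rel T.
Hypothesis le_refl : reflexive le.
Hypothesis le_anti : antisymmetric le.
Hypothesis le_trans : transitive le.

Definition comp x y := le x y || le y x.
Definition anti (A : {set T}) :=
  [forall x in A, forall y in A, (x != y) ==> ~~ comp x y].

Lemma compC x y : comp x y = comp y x.
Proof. by rewrite /comp orbC. Qed.

Lemma antiN (A : {set T}) x y : anti A -> x \in A -> y \in A -> x != y ->
  ~~ comp x y.
Proof.
move=> /forallP/(_ x)/implyP hA xA yA.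
by move: hA => /(_ xA)/forallP/(_ y)/implyP/(_ yA)/implyP.
Qed.

Lemma antiP (A : {set T}) x y : anti A -> x \in A -> y \in A -> comp x y -> x = y.
Proof.
move=> hA xA yA c; case: (eqVneq x y) => // nxy.
by have := antiN hA xA yA nxy; rewrite c.
Qed.

Lemma exists_max (S : {set T}) x : x \in S ->
  exists2 M, (M \in S) && le x M & forall z, z \in S -> le M z -> z = M.
Proof.
move=> xS.
pose P := [pred y | (y \in S) && le x y].
have Px : P x by rewrite /P /= xS le_refl.
case: (@arg_maxnP _ x P (fun y => #|[set z in S | le z y]|) Px) => M PM hM.
exists M => // z zS lMz.
case: (eqVneq z M) => // nzM; exfalso.
have Pz : P z by move: PM => /andP[_ h]; rewrite /P /= zS (le_trans h lMz).
have := hM z Pz; apply/negP; rewrite -ltnNge.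
apply: proper_card; apply/properP; split.
  apply/subsetP=> y; rewrite !inE => /andP[-> h] /=; exact: le_trans h lMz.
exists z; first by rewrite inE zS le_refl.
rewrite inE zS /=; apply/negP => lzM; move/eqP: nzM; apply.
by apply: le_anti; rewrite lzM.
Qed.

Lemma exists_min (S : {set T}) x : x \in S ->
  exists2 m, (m \in S) && le m x & forall z, z \in S -> le z m -> z = m.
Proof.
move=> xS.
pose P := [pred y | (y \in S) && le y x].
have Px : P x by rewrite /P /= xS le_refl.
case: (@arg_maxnP _ x P (fun y => #|[set z in S | le y z]|) Px) => M PM hM.
exists M => // z zS lMz.
case: (eqVneq z M) => // nzM; exfalso.
have Pz : P z by move: PM => /andP[_ h]; rewrite /P /= zS (le_trans lMz h).
have := hM z Pz; apply/negP; rewrite -ltnNge.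
apply: proper_card; apply/properP; split.
  apply/subsetP=> y; rewrite !inE => /andP[-> h] /=; exact: le_trans lMz h.
exists z; first by rewrite inE zS le_refl.
rewrite inE zS /=; apply/negP => lzM; move/eqP: nzM; apply.
by apply: le_anti; rewrite lzM lMz.
Qed.

Definition coverable (S : {set T}) k := exists f : T -> nat,
  (forall x, x \in S -> f x < k) /\
  (forall x y, x \in S -> y \in S -> f x = f y -> comp x y).

Lemma surj_colors (A : {set T}) k (f : T -> nat) : anti A -> #|A| = k ->
  (forall x, x \in A -> f x < k) ->
  (forall x y, x \in A -> y \in A -> f x = f y -> comp x y) ->
  forall c, c < k -> exists2 a, a \in A & f a = c.
Proof.
move=> hA cA hlt hc c ck.
have U : uniq (map f (enum A)).
  rewrite map_inj_in_uniq ?enum_uniq // => x y; rewrite !mem_enum => xA yA e.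
  exact: antiP hA xA yA (hc x y xA yA e).
have sub : {subset map f (enum A) <= iota 0 k}.
  move=> y /mapP[x]; rewrite mem_enum => xA ->; rewrite mem_iota /=.
  exact: hlt.
have hsz : size (iota 0 k) <= size (map f (enum A)).
  by rewrite size_iota size_map -cardE cA.
have [_ eqs] := uniq_min_size U sub hsz.
have : c \in iota 0 k by rewrite mem_iota.
rewrite -eqs => /mapP[a]; rewrite mem_enum => aA ->; by exists a.
Qed.

Lemma dilworth k (S : {set T}) :
  (forall A : {set T}, A \subset S -> anti A -> #|A| <= k) -> coverable S k.
Proof.
have [N] := ubnP #|S|; elim: N k S => // N IH k S /ltnSE hS hw.
case: (set_0Vmem S) => [-> | [x xS]].
  by exists (fun _ => 0); split => ?; rewrite inE.
have [m /andP[mS lmx] mmin] := exists_min xS.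
have [M /andP[MS lmM] Mmax] := exists_max mS.
have k0 : 0 < k.
  have := hw [set x]; rewrite cards1; apply; first by rewrite sub1set.
  apply/forallP=> y; apply/implyP; rewrite inE => /eqP->.
  by apply/forallP=> z; apply/implyP; rewrite inE => /eqP->; rewrite eqxx.
set C := [set m; M].
set S' := S :\: C.
have S'S : S' \subset S by apply: subsetDl.
have cS' : #|S'| < #|S|.
  apply: proper_card; apply/properP; split => //; exists m => //.
  by rewrite /S' in_setD /C !inE eqxx.
case: (boolP [exists A : {set T}, [&& A \subset S', anti A & k <= #|A|]])
  => [/existsP[A /and3P[AS' hA kA]] | hno]; last first.
  have [f' [f'lt f'c]] : coverable S' k.-1.
    apply: IH; first exact: leq_trans cS' hS.
    move=> A AS' hA; have := hw A (subset_trans AS' S'S) hA.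
    have : ~~ (k <= #|A|).
      apply/negP => kA; move/negP: hno; apply; apply/existsP; exists A.
      by rewrite AS' hA kA.
    lia.
  have hC : forall u, u \in C -> u = m \/ u = M.
    by move=> u; rewrite !inE => /orP[/eqP|/eqP]; auto.
  exists (fun y => if y \in C then k.-1 else f' y); split.
    move=> y yS; case: ifP => yC; first by lia.
    have : f' y < k.-1 by apply: f'lt; rewrite /S' in_setD yC yS.
    lia.
  move=> y z yS zS; case: ifP => yC; case: ifP => zC.
  - move=> _; rewrite /comp.
    case: (hC y yC) => ->; case: (hC z zC) => ->; rewrite ?le_refl //.
      by rewrite lmM.
    by rewrite lmM orbT.
  - have : f' z < k.-1 by apply: f'lt; rewrite /S' in_setD zC zS.
    by move=> h e; rewrite -e ltnn in h.
  - have : f' y < k.-1 by apply: f'lt; rewrite /S' in_setD yC yS.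
    by move=> h e; rewrite e ltnn in h.
  - by apply: f'c; rewrite /S' in_setD ?yC ?zC.
have AS : A \subset S := subset_trans AS' S'S.
have cA : #|A| = k by apply/eqP; rewrite eqn_leq kA hw.
pose Sm := [set y in S | [exists a in A, le y a]].
pose Sp := [set y in S | [exists a in A, le a y]].
have ASm : A \subset Sm.
  apply/subsetP => a aA; rewrite inE (subsetP AS a aA) /=.
  by apply/existsP; exists a; rewrite aA le_refl.
have ASp : A \subset Sp.
  apply/subsetP => a aA; rewrite inE (subsetP AS a aA) /=.
  by apply/existsP; exists a; rewrite aA le_refl.
have AnC : forall a, a \in A -> a \notin C.
  by move=> a /(subsetP AS'); rewrite /S' in_setD => /andP[].
have cSm : #|Sm| < #|S|.
  apply: proper_card; apply/properP; split.
    by apply/subsetP=> y; rewrite inE => /andP[].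
  exists M => //; rewrite inE MS /=; apply/negP => /existsP[a /andP[aA lMa]].
  have aS := subsetP AS a aA.
  by have := AnC a aA; rewrite (Mmax a aS lMa) /C !inE eqxx orbT.
have cSp : #|Sp| < #|S|.
  apply: proper_card; apply/properP; split.
    by apply/subsetP=> y; rewrite inE => /andP[].
  exists m => //; rewrite inE mS /=; apply/negP => /existsP[a /andP[aA lam]].
  have aS := subsetP AS a aA.
  by have := AnC a aA; rewrite (mmin a aS lam) /C !inE eqxx.
have hwm : forall B : {set T}, B \subset Sm -> anti B -> #|B| <= k.
  move=> B BS hB; apply: hw hB; apply: subset_trans BS _.
  by apply/subsetP=> y; rewrite inE => /andP[].
have hwp : forall B : {set T}, B \subset Sp -> anti B -> #|B| <= k.
  move=> B BS hB; apply: hw hB; apply: subset_trans BS _.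
  by apply/subsetP=> y; rewrite inE => /andP[].
have [fm [fmlt fmc]] := IH k Sm (leq_trans cSm hS) hwm.
have [fp [fplt fpc]] := IH k Sp (leq_trans cSp hS) hwp.
have cover : forall y, y \in S -> y \notin Sm -> y \in Sp.
  move=> y yS ySm; apply/negPn/negP => ySp.
  have yA : y \notin A by apply/negP => /(subsetP ASm); apply/negP.
  have : #|y |: A| <= k.
    apply: hw; first by rewrite subUset sub1set yS AS.
    have hy : forall v, v \in A -> ~~ comp y v.
      move=> v vA; rewrite /comp; apply/norP; split; apply/negP => h.
      + by move/negP: ySm; apply; rewrite inE yS; apply/existsP; exists v; rewrite vA h.
      + by move/negP: ySp; apply; rewrite inE yS; apply/existsP; exists v; rewrite vA h.
    apply/forallP=> u; apply/implyP; rewrite in_setU1 => hu.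
    apply/forallP=> v; apply/implyP; rewrite in_setU1 => hv; apply/implyP => nuv.
    case/orP: hu => [/eqP eu|uA]; case/orP: hv => [/eqP ev|vA].
    - by rewrite eu ev eqxx in nuv.
    - by rewrite eu hy.
    - by rewrite ev compC hy.
    - exact: antiN hA uA vA nuv.
  by rewrite cardsU1 yA cA /= add1n ltnn.
have pickA : forall y, y \in S -> y \notin Sm ->
    exists2 a, a \in A & ([pick a in A | fp a == fp y] = Some a /\ fp a = fp y).
  move=> y yS ySm; have ySp := cover y yS ySm.
  case: pickP => [a /andP[aA /eqP e] | hn]; first by exists a.
  have h1 : forall u, u \in A -> fp u < k.
    by move=> u uA; apply: fplt; apply: (subsetP ASp).
  have h2 : forall u v, u \in A -> v \in A -> fp u = fp v -> comp u v.
    by move=> u v uA vA; apply: fpc; apply: (subsetP ASp).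
  have [a aA e] := surj_colors hA cA h1 h2 (fplt y ySp).
  by have := hn a; rewrite aA e eqxx.
have topA : forall y a, y \in Sm -> a \in A -> comp y a -> le y a.
  move=> y a; rewrite inE => /andP[_ /existsP[a' /andP[a'A lya']]] aA.
  case/orP => // lay.
  have e : a = a' by apply: antiP hA aA a'A _; rewrite /comp (le_trans lay lya').
  by rewrite e.
have botA : forall y a, y \in Sp -> a \in A -> comp a y -> le a y.
  move=> y a; rewrite inE => /andP[_ /existsP[a' /andP[a'A lya']]] aA.
  case/orP => // lay.
  have e : a = a' by apply: antiP hA aA a'A _; rewrite /comp (le_trans lya' lay) orbT.
  by rewrite e.
have mixed : forall y z, y \in S -> z \in S -> y \in Sm -> z \notin Sm ->
    fm y = (if [pick a in A | fp a == fp z] is Some a then fm a else 0) ->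
    comp y z.
  move=> y z yS zS ySm zSm.
  have [b bA [-> eb]] := pickA z zS zSm => e.
  have bSm := subsetP ASm b bA; have bSp := subsetP ASp b bA.
  have zSp := cover z zS zSm.
  have lyb := topA y b ySm bA (fmc y b ySm bSm e).
  have lbz := botA z b zSp bA (fpc b z bSp zSp eb).
  by rewrite /comp (le_trans lyb lbz).
exists (fun y => if y \in Sm then fm y else
          if [pick a in A | fp a == fp y] is Some a then fm a else 0); split.
  move=> y yS; case: ifP => ySm; first exact: fmlt.
  have [a aA [-> _]] := pickA y yS (negbT ySm).
  exact: fmlt (subsetP ASm a aA).
move=> y z yS zS; case: ifP => ySm; case: ifP => zSm.
- exact: fmc.
- exact: mixed (negbT zSm).
- by move=> e; rewrite compC; apply: mixed (negbT ySm) _.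
have [a aA [-> ea]] := pickA y yS (negbT ySm).
have [b bA [-> eb]] := pickA z zS (negbT zSm).
move=> e; have eab : a = b.
  apply: (antiP hA aA bA); apply: (fmc a b _ _ e).
    exact: (subsetP ASm _ aA).
  exact: (subsetP ASm _ bA).
apply: fpc; [exact: cover (negbT ySm) | exact: cover (negbT zSm) |].
by rewrite -ea -eb eab.
Qed.

End Dil.

Lemma bigmin_le (I : eqType) (r : seq I) (P : pred I) (F : I -> nat) x0 j :
  j \in r -> P j -> \big[minn/x0]_(i <- r | P i) F i <= F j.
Proof.
elim: r => // a r IH; rewrite inE big_cons => /orP[/eqP<- Pj|jr Pj].
  by rewrite Pj geq_minl.
case: ifP => _; last exact: IH.
exact: leq_trans (geq_minr _ _) (IH jr Pj).
Qed.

Section Perf.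
Variable V : finType.
Variable le : rel V.
Hypothesis le_refl : reflexive le.
Hypothesis le_anti : antisymmetric le.
Hypothesis le_trans : transitive le.
Variable e : rel V.
Hypothesis he : forall x y, e x y = (x != y) && ~~ comp le x y.

Lemma clique_anti K : is_clique e K = anti le K.
Proof.
rewrite /is_clique /anti; apply: eq_forallb => x; congr (_ ==> _).
apply: eq_forallb => y; congr (_ ==> _); rewrite he; by case: (x != y).
Qed.

Lemma perf S : clique_num e S = chrom_num e S.
Proof.
set w := clique_num e S.
have P0 : (set0 \subset S) && is_clique e set0.
  by rewrite sub0set /=; apply/forallP=> x; rewrite inE.
have [K0 /andP[K0S K0c] eK0] :
    exists2 K0 : {set V}, (K0 \subset S) && is_clique e K0 & w = #|K0|.
  rewrite /w /clique_num (bigmax_eq_arg set0 P0).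
  by case: arg_maxnP => // K0 PK0 _; exists K0.
have hw : forall A : {set V}, A \subset S -> anti le A -> #|A| <= w.
  move=> A AS hA; rewrite /w /clique_num.
  by apply: (leq_bigmax_cond A); rewrite AS clique_anti.
have [f [flt fc]] := dilworth le_refl le_anti le_trans hw.
have wV : w <= #|V| by rewrite eK0 max_card.
pose g := [ffun x => insubd (enum_rank x) (f x) : 'I_#|V|].
have vf : forall x, x \in S -> nat_of_ord (g x) = f x.
  move=> x xS; rewrite /g ffunE.
  have := val_insubd (enum_rank x) (f x); rewrite /= (leq_trans (flt x xS) wV).
  by [].
have col : colorable e S w.
  apply/existsP; exists g; apply/andP; split; apply/forallP => x;
    apply/implyP => xS.
    by rewrite vf // flt.
  apply/forallP=> y; apply/implyP => yS; apply/implyP; rewrite he.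
  move=> /andP[_ nc]; apply/negP => /eqP egy.
  by move/negP: nc; apply; apply: fc => //; rewrite -vf // -vf // egy.
apply/eqP; rewrite eqn_leq; apply/andP; split; last first.
  rewrite /chrom_num.
  have h := @bigmin_le _ (index_enum 'I_#|V|.+1) (fun k => colorable e S k)
    (fun k => nat_of_ord k) #|V| (Ordinal (wV : w < #|V|.+1)) (mem_index_enum _) col.
  exact: h.
rewrite /chrom_num; elim/big_ind: _ => //.
  by move=> a b ha hb; rewrite leq_min ha hb.
move=> k /existsP[h /andP[/forallP hlt /forallP hinj]].
rewrite eK0 cardE.
have U : uniq (map (fun x => nat_of_ord (h x)) (enum K0)).
  rewrite map_inj_in_uniq ?enum_uniq // => x y; rewrite !mem_enum => xK yK exy.
  case: (eqVneq x y) => // nxy; exfalso.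
  have xS := subsetP K0S x xK; have yS := subsetP K0S y yK.
  have exy' : e x y.
    by move: K0c => /forallP/(_ x)/implyP/(_ xK)/forallP/(_ y)/implyP/(_ yK)/implyP/(_ nxy).
  have := hinj x; rewrite xS /= => /forallP/(_ y); rewrite yS exy' /=.
  by move/eqP; apply; apply/val_inj.
have := uniq_leq_size (s2 := iota 0 k) U.
rewrite size_map size_iota; apply => y /mapP[x]; rewrite mem_enum => xK ->.
rewrite mem_iota /=.
by have := hlt x; rewrite (subsetP K0S x xK).
Qed.
End Perf.

Import GRing.Theory.

Lemma Z2mulE n (a b : Z2pow n) i : (a * b)%R i = (a i * b i)%R.
Proof. by rewrite /GRing.mul /= ffunE. Qed.

Lemma Z2idem (x : 'Z_2) : (x * x)%R = x.
Proof. by case: x => [[|[|//]] ?]; apply/val_inj. Qed.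

Lemma Z2pow_idem n (a : Z2pow n) : (a * a)%R = a.
Proof. by apply/ffunP => i; rewrite Z2mulE Z2idem. Qed.

Lemma Z2pow_comm n (a b : Z2pow n) : (a * b)%R = (b * a)%R.
Proof. by apply/ffunP => i; rewrite !Z2mulE GRing.mulrC. Qed.

Theorem theorem3p2 (n : nat) (hn : (1 <= n)%N) :
  perfect (@cozero_adj (Z2pow n)) (Wstar (Z2pow n)).
Proof.
move=> S _.
pose le := @in_principal (Z2pow n).
have lrefl : reflexive le.
  by move=> a; apply/existsP; exists 1%R; rewrite GRing.mul1r.
have ltrans : transitive le.
  move=> b a c /existsP[r /eqP ea] /existsP[s /eqP eb]; apply/existsP.
  by exists (r * s)%R; rewrite ea eb GRing.mulrA.
have lanti : antisymmetric le.
  move=> a b /andP[/existsP[r /eqP ea] /existsP[s /eqP eb]].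
  have h1 : (a * b)%R = a by rewrite ea -GRing.mulrA Z2pow_idem.
  have h2 : (b * a)%R = b by rewrite eb -GRing.mulrA Z2pow_idem.
  by rewrite -h1 Z2pow_comm h2.
apply: (perf lrefl lanti ltrans).
by move=> x y; rewrite /cozero_adj /comp negb_or.
Qed.
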